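(* Suppose $F$ is regular, i.e., $r''$ is bounded above on some neighborhood $(1-\delta,1)$ of $1$. Define \[ k=\sup\Big\{\alpha>1:\ r(v)r''(v)+r'(v)\le 1 \text{ for all } v\in(0,1) \text{ with } \psi(v)\ge \tfrac1\alpha\Big\}\in(1,\infty]. \] If $q_h\le kc$, then \[ r(v)r''(v)+r'(v)\le 1 \quad\text{for all } v\in\big(\overline p(q_h),\overline p(q_\ell)\big). \]
   Context: Let $0<q_\ell<q_h<\infty$, $Q=[q_\ell,q_h]$, and let $c$ be a real number with $0<c<q_\ell$. Let $F$ be a probability distribution on $[0,1]$ with support $[0,1]$ admitting a twice continuously differentiable density $f:(0,1)\to\mathbb{R}_{>0}$. Define the inverse hazard rate $r(v)=(1-F(v))/f(v)$ and the virtual valuation $\psi(v)=v-r(v)$ on $(0,1)$, and assume $\psi'(v)>0$ whenever $\psi(v)>0$. For $q\in Q$, $p(q)$ is the unique maximizer over $p\in\mathbb{R}$ of $(p-c)\big(1-F(p/q)\big)$, and $\overline p(q)=p(q)/q$. *)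

(* Defs.v *)
From Stdlib Require Import Reals.
From Coquelicot Require Import Coquelicot.
Open Scope R_scope.

Definition cdf_with_density (F f : R -> R) : Prop :=
  (forall v, continuous F v) /\
  (forall v, v <= 0 -> F v = 0) /\
  (forall v, 1 <= v -> F v = 1) /\
  (forall v, 0 < v < 1 -> is_derive F v (f v)) /\
  (forall v, 0 < v < 1 -> 0 < f v) /\
  (forall v, 0 < v < 1 ->
     ex_derive f v /\ ex_derive (Derive f) v /\
     continuous (Derive (Derive f)) v).

Definition inv_hazard (F f : R -> R) (v : R) : R := (1 - F v) / f v.
Definition virt_val (F f : R -> R) (v : R) : R := v - inv_hazard F f v.

Definition regular (F f : R -> R) : Prop :=
  exists delta M, 0 < delta /\
    forall v, 1 - delta < v < 1 ->
      Derive (Derive (inv_hazard F f)) v <= M.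

Definition cond_at (F f : R -> R) (v : R) : Prop :=
  inv_hazard F f v * Derive (Derive (inv_hazard F f)) v
    + Derive (inv_hazard F f) v <= 1.

Definition k_const (F f : R -> R) : Rbar :=
  Lub_Rbar (fun alpha => 1 < alpha /\
     forall v, 0 < v < 1 -> / alpha <= virt_val F f v -> cond_at F f v).

(* seller's objective for quality q at price x *)
Definition profit (F : R -> R) (c q x : R) : R := (x - c) * (1 - F (x / q)).

(* Main.v *)
Require Import Defs.
From Stdlib Require Import Reals Lra Classical.
From Coquelicot Require Import Coquelicot.
Open Scope R_scope.

Lemma right_incr (g : R -> R) x l b :
  is_derive g x l -> 0 < l -> x < b -> exists y, x < y <= b /\ g x < g y.
Proof.
  intros Hd Hl Hb. apply is_derive_Reals in Hd.
  destruct (Hd (l/2) ltac:(lra)) as [d Hdd].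
  set (h := Rmin (d/2) (b - x)).
  assert (Hh : 0 < h). { unfold h; apply Rmin_pos; [destruct d; simpl; lra| lra]. }
  assert (Hh2 : h <= d/2) by apply Rmin_l.
  assert (Hh3 : h <= b - x) by apply Rmin_r.
  assert (Hq := Hdd h ltac:(lra) ltac:(rewrite Rabs_pos_eq; destruct d; simpl in *; lra)).
  exists (x + h). split; [lra|].
  apply Rabs_def2 in Hq. destruct Hq as [Hq1 Hq2].
  assert (Hpos : 0 < (g (x + h) - g x) / h) by lra.
  assert (0 < g (x+h) - g x).
  { replace (g (x + h) - g x) with (((g (x + h) - g x) / h) * h) by (field; lra).
    apply Rmult_lt_0_compat; lra. }
  lra.
Qed.

Lemma incr_ab (g : R -> R) a b :
  a < b -> (forall x, a <= x <= b -> continuity_pt g x) ->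
  (forall x, a <= x < b -> g a <= g x -> exists l, is_derive g x l /\ 0 < l) ->
  g a < g b.
Proof.
  intros Hab Hc Hd.
  destruct (continuity_ab_maj g a b ltac:(lra) Hc) as [M [HM HMr]].
  assert (HaM : g a <= g M) by (apply HM; lra).
  destruct (Req_dec M b) as [->|HMb].
  - destruct (Rle_lt_or_eq_dec _ _ HaM) as [H|H]; [exact H|].
    destruct (Hd a ltac:(lra) ltac:(lra)) as [l [Hl Hl0]].
    destruct (right_incr g a l b Hl Hl0 Hab) as [y [Hy Hy2]].
    assert (g y <= g b) by (apply HM; lra). lra.
  - destruct (Hd M ltac:(lra) HaM) as [l [Hl Hl0]].
    destruct (right_incr g M l b Hl Hl0 ltac:(lra)) as [y [Hy Hy2]].
    assert (g y <= g M) by (apply HM; lra). lra.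
Qed.

Lemma cont_of (g : R -> R) x : ex_derive g x -> continuity_pt g x.
Proof. intro H. apply continuity_pt_filterlim. exact (@ex_derive_continuous R_AbsRing R_NormedModule g x H). Qed.

Lemma F_lt1 F f v : cdf_with_density F f -> 0 < v < 1 -> F v < 1.
Proof.
  intros [Hc [H0 [H1 [Hd [Hf _]]]]] Hv.
  rewrite <- (H1 1) by lra.
  apply incr_ab; [lra| |].
  - intros x _. apply continuity_pt_filterlim. apply Hc.
  - intros x Hx _. exists (f x). split; [apply Hd; lra| apply Hf; lra].
Qed.

Lemma psi_ex F f v : cdf_with_density F f -> 0 < v < 1 -> ex_derive (virt_val F f) v.
Proof.
  intros HF Hv. destruct HF as [Hc [H0 [H1 [Hd [Hf Hf2]]]]].
  unfold virt_val, inv_hazard. auto_derive.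
  repeat split.
  - eexists; apply Hd; lra.
  - apply Hf2; lra.
  - specialize (Hf v Hv); lra.
Qed.

Lemma pbar_props F f c q p :
  0 < c -> c < q -> cdf_with_density F f ->
  (forall x, x <> p -> profit F c q x < profit F c q p) ->
  c / q < p / q < 1 /\ virt_val F f (p / q) = c / q.
Proof.
  intros Hc Hcq HF Hmax.
  assert (Hq : 0 < q) by lra.
  assert (Hcq1 : c / q < 1) by (apply Rmult_lt_reg_r with q; [lra|]; field_simplify; lra).
  assert (Hcq0 : 0 < c / q) by (apply Rdiv_lt_0_compat; lra).
  pose proof HF as [Hcont [H0 [H1 [Hd [Hf _]]]]].
  set (w := (c / q + 1) / 2).
  assert (Hpw : 0 < profit F c q (q * w)).
  { unfold profit. replace (q * w / q) with w by (field; lra).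
    apply Rmult_lt_0_compat.
    - assert (q * w - c = q * (w - c/q)) by (field; lra). rewrite H.
      apply Rmult_lt_0_compat; unfold w; lra.
    - assert (F w < 1) by (apply (F_lt1 F f); auto; unfold w; lra). lra. }
  assert (HP : 0 < profit F c q p).
  { destruct (Req_dec (q * w) p) as [<-|Hne]; [exact Hpw|].
    specialize (Hmax _ Hne). lra. }
  set (v0 := p / q).
  assert (Hpv : p = q * v0) by (unfold v0; field; lra).
  assert (HPe : profit F c q p = (q * v0 - c) * (1 - F v0)).
  { unfold profit. fold v0. rewrite <- Hpv. reflexivity. }
  assert (Hv1 : v0 < 1).
  { destruct (Rlt_or_le v0 1) as [H|H]; [exact H|].
    rewrite HPe, (H1 v0 H) in HP. lra. }
  assert (Hv0 : c / q < v0).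
  { destruct (Rlt_or_le (c/q) v0) as [H|H]; [exact H|].
    exfalso.
    assert (q * v0 - c <= 0).
    { assert (q * v0 <= q * (c / q)) by (apply Rmult_le_compat_l; lra).
      replace (q * (c / q)) with c in H2 by (field; lra). lra. }
    destruct (Rle_or_lt v0 0) as [H3|H3].
    - rewrite HPe, (H0 v0 H3) in HP. nra.
    - assert (F v0 < 1) by (apply (F_lt1 F f); auto; lra).
      rewrite HPe in HP. nra. }
  split; [split; assumption|].
  set (h := fun t => (q * t - c) * (1 - F t)).
  set (l := q * (1 - F v0) + (q * v0 - c) * (- f v0)).
  assert (Hh : is_derive h v0 l).
  { unfold h, l. auto_derive.
    - exists (f v0); apply Hd; lra.
    - replace (Derive (fun x => F x) v0) with (f v0) by (symmetry; apply is_derive_unique; apply Hd; lra). ring. }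
  assert (Hmaxh : forall t, h t <= h v0).
  { intro t. unfold h. rewrite <- HPe.
    replace ((q * t - c) * (1 - F t)) with (profit F c q (q * t)).
    2:{ unfold profit. replace (q * t / q) with t by (field; lra). reflexivity. }
    destruct (Req_dec (q * t) p) as [->|Hne]; [lra|].
    left; apply Hmax; exact Hne. }
  apply is_derive_Reals in Hh.
  pose proof (deriv_maximum h (v0 - 1) (v0 + 1) v0 (exist _ l Hh) ltac:(lra) ltac:(lra)
    (fun x _ _ => Hmaxh x)) as Hl.
  simpl in Hl. unfold l in Hl.
  assert (Hfv : 0 < f v0) by (apply Hf; lra).
  unfold virt_val, inv_hazard.
  apply Rmult_eq_reg_r with (q * f v0); [| nra].
  field_simplify; [|lra|lra]. 
  nra.
Qed.

Theorem proposition2 (F f : R -> R) (ql qh c : R) (p : R -> R) :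
  0 < ql -> ql < qh -> 0 < c -> c < ql ->
  cdf_with_density F f ->
  (forall v, 0 < v < 1 -> 0 < virt_val F f v ->
     0 < Derive (virt_val F f) v) ->
  (* p q is the unique maximizer of (x - c)(1 - F(x/q)) over x in R, q in Q *)
  (forall q, ql <= q <= qh ->
     forall x, x <> p q -> profit F c q x < profit F c q (p q)) ->
  regular F f ->
  Rbar_le (Finite qh) (Rbar_mult (k_const F f) (Finite c)) ->
  forall v, p qh / qh < v < p ql / ql -> cond_at F f v.
Proof.
  intros Hql Hqlh Hc Hcl HF Hpsi Hmax _ Hk v Hv.
  destruct (pbar_props F f c qh (p qh) Hc ltac:(lra) HF (Hmax qh ltac:(lra)))
    as [[Hh1 Hh2] Hh3].
  destruct (pbar_props F f c ql (p ql) Hc ltac:(lra) HF (Hmax ql ltac:(lra)))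
    as [[Hl1 Hl2] Hl3].
  assert (Hch : 0 < c / qh) by (apply Rdiv_lt_0_compat; lra).
  assert (Hpv : c / qh < virt_val F f v).
  { rewrite <- Hh3. apply incr_ab; [lra| |].
    - intros x Hx. apply cont_of. apply psi_ex; auto; lra.
    - intros x Hx Hle. exists (Derive (virt_val F f) x). split.
      + apply Derive_correct. apply psi_ex; auto; lra.
      + apply Hpsi; lra. }
  set (y := / virt_val F f v).
  assert (Hy : y * c < qh).
  { assert (H1 : c < virt_val F f v * qh).
    { replace c with ((c / qh) * qh) at 1 by (field; lra).
      apply Rmult_lt_compat_r; lra. }
    assert (H2 : 0 < y) by (unfold y; apply Rinv_0_lt_compat; lra).
    replace qh with (y * (virt_val F f v * qh)) by (unfold y; field; lra).
    apply Rmult_lt_compat_l; lra. }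
  unfold k_const in Hk.
  set (E := fun alpha => 1 < alpha /\
     forall v, 0 < v < 1 -> / alpha <= virt_val F f v -> cond_at F f v) in Hk.
  destruct (Lub_Rbar_correct E) as [Hub Hlub].
  destruct (classic (exists a, E a /\ y < a)) as [[a [[Ha1 Ha2] Hya]] | Hno].
  - apply Ha2; [lra|].
    assert (0 < y) by (unfold y; apply Rinv_0_lt_compat; lra).
    left. replace (virt_val F f v) with (/ y) by (unfold y; field; lra).
    apply Rinv_lt_contravar; nra.
  - exfalso.
    assert (Hu : is_ub_Rbar E y).
    { intros a Ea. simpl. destruct (Rle_or_lt a y) as [H|H]; [exact H|].
      exfalso; apply Hno; exists a; auto. }
    specialize (Hlub _ Hu). fold E in Hk.
    destruct (Lub_Rbar E) as [k| |]; simpl in Hlub, Hk.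
    + assert (k * c <= y * c) by (apply Rmult_le_compat_r; lra). lra.
    + exact Hlub.
    + destruct (Rle_dec 0 c) as [H|H]; simpl in Hk; try lra.
      destruct (Rle_lt_or_eq_dec 0 c H); simpl in Hk; lra.
Qed.
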